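(* Let $q$ be a vertex-labelled query hypergraph with labelling $l_q$ and $H$ a vertex-labelled data hypergraph with labelling $l_H$. Let $q'$ be a partial query of $q$ with hyperedges $e_1,\dots,e_k$ (in matching order), and let $e_{q'}=e_k$ be its last hyperedge. Let $m'$ be a partial embedding of $q'$, i.e. an injective assignment $f(e_i)\in E(H)$ ($1\le i\le k$), and write $e_{m'}=f(e_k)$. Assume that the partial embedding $m=(f(e_1),\dots,f(e_{k-1}))$ is a valid embedding of the partial query $q''$ formed by $e_1,\dots,e_{k-1}$. Then $m'$ is a valid embedding of $q'$ if and only if the two multisets $$\{\mathcal{P}_{q'\rightarrow m'}(u) : u\in e_{q'}\} \quad\text{and}\quad \{\mathcal{P}(v) : v\in e_{m'}\}$$ are equal.
   Context: A hypergraph consists of a vertex set and a set of hyperedges, each a nonempty subset of the vertex set; vertices carry labels. A partial query $q'$ is the subhypergraph of $q$ formed by a set of query hyperedges together with the vertices they contain. For a partial embedding $m'$ (an injective map $f$ from $E(q')$ to $E(H)$), $H_{m'}$ denotes the subhypergraph of $H$ consisting of the data hyperedges $f(e)$, $e\in E(q')$, and the vertices they contain. The partial embedding $m'$ is valid (an embedding of $q'$) if there exists a bijection $g:V(q')\to V(H_{m'})$ with $l_H(g(u))=l_q(u)$ for all $u\in V(q')$ and $g(e)=f(e)$ (as vertex sets) for every $e\in E(q')$. For a data vertex $v\in V(H_{m'})$, its vertex profile is $\mathcal{P}(v)=(l_H(v),\, he_{H_{m'}}(v))$, where $he_{H_{m'}}(v)$ is the set of hyperedges of $H_{m'}$ containing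 $v$. For a query vertex $u\in V(q')$, $\mathcal{P}_{q'\rightarrow m'}(u)=(l_q(u),\,\{f(e): e\in he_{q'}(u)\})$, where $he_{q'}(u)$ is the set of hyperedges of $q'$ containing $u$. *)

(* Defs.v *)
From mathcomp Require Import all_boot.
Set Implicit Arguments. Unset Strict Implicit. Unset Printing Implicit Defensive.

(* A hyperedge is a finite set of vertices. A (partial) query is given by the
   sequence of its hyperedges in matching order. *)

Definition vset (T : finType) (E : seq {set T}) : {set T} := \bigcup_(e <- E) e.

Definition is_embedding (Vq Vh : finType) (L : eqType)
    (lq : Vq -> L) (lH : Vh -> L) (E : seq {set Vq}) (f : {set Vq} -> {set Vh}) : Prop :=
  exists g : Vq -> Vh,
    [/\ {in vset E &, injective g},
        g @: vset E = vset (map f E),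
        {in vset E, forall u, lH (g u) = lq u} &
        (forall e : {set Vq}, e \in E -> g @: e = f e)].

Definition qprofile (Vq Vh : finType) (L : eqType) (lq : Vq -> L)
    (f : {set Vq} -> {set Vh}) (E : seq {set Vq}) (u : Vq) : L * {set {set Vh}} :=
  (lq u, f @: [set e : {set Vq} | (e \in E) && (u \in e)]).

Definition dprofile (Vh : finType) (L : eqType) (lH : Vh -> L)
    (F : seq {set Vh}) (v : Vh) : L * {set {set Vh}} :=
  (lH v, [set e : {set Vh} | (e \in F) && (v \in e)]).

(* Main.v *)
Require Import Defs.
From mathcomp Require Import all_boot.

Lemma count_enum_card (T : finType) (A : {set T}) (P : pred T) :
  count P (enum A) = #|[set u in A | P u]|.
Proof.
rewrite -size_filter cardE; apply: perm_size; apply: uniq_perm.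
- by rewrite filter_uniq // enum_uniq.
- exact: enum_uniq.
by move=> u; rewrite mem_filter !mem_enum !inE andbC.
Qed.

Lemma vsetP (T : finType) (E : seq {set T}) u :
  reflect (exists2 e, e \in E & u \in e) (u \in vset E).
Proof.
rewrite /vset bigcup_seq; apply: (iffP bigcupP) => [[e He Hu]|[e He Hu]]; by exists e.
Qed.

Lemma qprof_ne0 (Vq Vh : finType) (L : eqType) (lq : Vq -> L) (f : {set Vq} -> {set Vh})
  (E : seq {set Vq}) u :
  ((qprofile lq f E u).2 != set0) = (u \in vset E).
Proof.
rewrite /= imset_eq0; apply/set0Pn/vsetP => [[e]|[e He Hu]].
  by rewrite inE => /andP[]; exists e.
by exists e; rewrite inE He.
Qed.

Lemma dprof_ne0 (Vh : finType) (L : eqType) (lH : Vh -> L) (F : seq {set Vh}) v :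
  ((dprofile lH F v).2 != set0) = (v \in vset F).
Proof.
apply/set0Pn/vsetP => [[e]|[e He Hu]].
  by rewrite inE => /andP[]; exists e.
by exists e; rewrite inE He.
Qed.

Lemma emb_prof (Vq Vh : finType) (L : eqType) (lq : Vq -> L) (lH : Vh -> L)
  (E : seq {set Vq}) (f : {set Vq} -> {set Vh}) (g : Vq -> Vh) :
  {in vset E &, injective g} ->
  {in vset E, forall u, lH (g u) = lq u} ->
  (forall e : {set Vq}, e \in E -> g @: e = f e) ->
  {in vset E, forall u, dprofile lH (map f E) (g u) = qprofile lq f E u}.
Proof.
move=> ginj glab gE u uV; rewrite /dprofile /qprofile glab //; congr pair.
apply: (iffLR (setP _ _)) => e'; rewrite !inE; apply/andP/imsetP => [[/mapP[e He ->] Hg]|[e]].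
  exists e => //; rewrite inE He /=.
  move: Hg; rewrite -gE // => /imsetP[u' Hu' Heq].
  have u'V : u' \in vset E by apply/vsetP; exists e.
  by rewrite (ginj _ _ uV u'V Heq).
rewrite inE => /andP[He Hu] ->; split; first exact: map_f.
by rewrite -gE //; apply: imset_f.
Qed.

Lemma emb_count (Vq Vh : finType) (L : eqType) (lq : Vq -> L) (lH : Vh -> L)
  (E : seq {set Vq}) (f : {set Vq} -> {set Vh}) :
  is_embedding lq lH E f ->
  forall x, x.2 != set0 ->
  #|[set u | qprofile lq f E u == x]| = #|[set v | dprofile lH (map f E) v == x]|.
Proof.
move=> [g [ginj gV glab gE]] x x0.
have Hp := @emb_prof _ _ _ lq lH E f g ginj glab gE.
have sub : [set u | qprofile lq f E u == x] \subset vset E.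
  by apply/subsetP => u; rewrite inE => /eqP qx; rewrite -(qprof_ne0 _ _ _ lq f) qx.
rewrite -(card_in_imset (f:=g)); last first.
  by move=> a b Ha Hb; apply: ginj; apply: (subsetP sub).
apply: eq_card => v; rewrite inE; apply/imsetP/idP => [[u Hu ->]|/eqP dx].
  by rewrite Hp ?(subsetP sub) //; rewrite inE in Hu.
have : v \in vset (map f E) by rewrite -(dprof_ne0 _ _ lH) dx.
rewrite -gV => /imsetP[u uV vu]; exists u => //.
by rewrite inE -Hp // -vu dx.
Qed.
Arguments emb_count {Vq Vh L lq lH E f}.

Lemma count_emb (Vq Vh : finType) (L : eqType) (lq : Vq -> L) (lH : Vh -> L)
  (E : seq {set Vq}) (f : {set Vq} -> {set Vh}) (v0 : Vh) :
  {in E &, injective f} ->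
  (forall x, x.2 != set0 ->
  #|[set u | qprofile lq f E u == x]| = #|[set v | dprofile lH (map f E) v == x]|) ->
  is_embedding lq lH E f.
Proof.
move=> finj Hc.
set qE := qprofile lq f E; set dE := dprofile lH (map f E).
pose A x := enum [set u | qE u == x]; pose B x := enum [set v | dE v == x].
pose g u := nth v0 (B (qE u)) (index u (A (qE u))).
have Hsz : forall u, u \in vset E -> size (A (qE u)) = size (B (qE u)).
  by move=> u uV; rewrite /A /B -!cardE Hc // qprof_ne0.
have Hidx : forall u, u \in vset E -> index u (A (qE u)) < size (B (qE u)).
  move=> u uV; rewrite -Hsz // index_mem mem_enum inE //.
have Hp : {in vset E, forall u, dE (g u) = qE u}.
  move=> u uV; have := mem_nth v0 (Hidx u uV).
  by rewrite mem_enum inE => /eqP.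
have ginj : {in vset E &, injective g}.
  move=> u1 u2 V1 V2 Heq.
  have Hq : qE u1 = qE u2 by rewrite -Hp // Heq Hp.
  have I1 := Hidx u1 V1; have I2 := Hidx u2 V2; rewrite Hq in I1.
  have a1 : u1 \in A (qE u2) by rewrite mem_enum inE Hq.
  have a2 : u2 \in A (qE u2) by rewrite mem_enum inE.
  move: Heq; rewrite /g Hq => /eqP; rewrite (nth_uniq v0 I1 I2) ?enum_uniq // => /eqP Hi.
  by rewrite -(nth_index u1 a1) Hi nth_index.
have gsurj : forall v, v \in vset (map f E) -> exists2 u, u \in vset E & g u = v.
  move=> v vV; set x := dE v.
  have x0 : x.2 != set0 by rewrite dprof_ne0.
  have : 0 < #|[set u | qE u == x]|.
    by rewrite Hc // card_gt0; apply/set0Pn; exists v; rewrite inE.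
  rewrite card_gt0 => /set0Pn[u0]; rewrite inE => /eqP qu0.
  have vB : v \in B x by rewrite mem_enum inE.
  have Hi : index v (B x) < size (A x).
    by rewrite /A /B -cardE Hc // cardE index_mem.
  set u := nth u0 (A x) (index v (B x)).
  have uA : u \in A x by apply: mem_nth.
  have qu : qE u = x by move: uA; rewrite mem_enum inE => /eqP.
  have uV : u \in vset E by rewrite -(qprof_ne0 _ _ _ lq f) -/qE qu.
  exists u => //; rewrite /g qu index_uniq ?enum_uniq // nth_index //.
exists g; split => //.
- apply/setP => v; apply/imsetP/idP => [[u uV ->]|/gsurj[u uV <-]]; last by exists u.
  by rewrite -(dprof_ne0 _ _ lH) -/dE Hp // qprof_ne0.
- by move=> u uV; have := Hp u uV; rewrite /dE /qE /dprofile /qprofile => -[].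
move=> e He; apply/setP => v; apply/imsetP/idP => [[u uE ->]|vf].
  have uV : u \in vset E by apply/vsetP; exists e.
  have : f e \in (dE (g u)).2 by rewrite Hp //; apply: imset_f; rewrite inE He.
  by rewrite inE => /andP[].
have vV : v \in vset (map f E) by apply/vsetP; exists (f e) => //; apply: map_f.
have [u uV gu] := gsurj v vV; exists u => //.
have : f e \in (dE v).2 by rewrite inE map_f.
rewrite -gu Hp // => /imsetP[e' ]; rewrite inE => /andP[He' ue'] fe.
by rewrite (finj _ _ He He' fe).
Qed.
Arguments count_emb {Vq Vh L lq lH E f}.

Lemma split_card (T S : finType) (L : eqType) (p p' : T -> L * {set S}) (K : {set T}) (a : S) :
  (forall u, a \notin (p u).2) ->
  (forall u, p' u = ((p u).1, (p u).2 :|: (if u \in K then [set a] else set0))) ->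
  forall x : L * {set S}, a \notin x.2 ->
  #|[set u | p u == x]| = #|[set u | p' u == x]| + #|[set u in K | p' u == ((x.1, a |: x.2) : L * {set S})]|.
Proof.
move=> pa pp x ax; rewrite -(cardsID K) addnC; congr (_ + _); apply: eq_card => u;
  rewrite !inE pp; case: (boolP (u \in K)) => uK /=; rewrite ?setU0 ?andbT ?andbF //.
- apply/esym/negbTE; apply: contra ax => /eqP <- /=.
  by rewrite !inE eqxx orbT.
- case: x ax => l X /= aX; case: (p u) (pa u) => l' Y /= aY.
  rewrite !xpair_eqE; apply/andP/andP => -[-> /eqP H]; split=> //.
    by rewrite H setUC.
  apply/eqP/setP => y; have := congr1 (fun Z : {set S} => y \in Z) H; rewrite !inE.
  case: (y =P a) => [->|_] /=; last by rewrite orbF.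
  by rewrite (negPf aY) (negPf aX).
Qed.

Lemma in_card (T S : finType) (L : eqType) (p p' : T -> L * {set S}) (K : {set T}) (a : S) :
  (forall u, a \notin (p u).2) ->
  (forall u, p' u = ((p u).1, (p u).2 :|: (if u \in K then [set a] else set0))) ->
  forall x : L * {set S}, a \in x.2 -> [set u | p' u == x] = [set u in K | p' u == x].
Proof.
move=> pa pp x ax; apply/setP => u; rewrite !inE.
case: (boolP (u \in K)) => uK //=; apply/negbTE; apply: contraL ax => /eqP <-.
by rewrite pp (negPf uK) setU0 /=; apply: pa.
Qed.

Lemma out_card (T S : finType) (L : eqType) (p p' : T -> L * {set S}) (K : {set T}) (a : S) :
  (forall u, p' u = ((p u).1, (p u).2 :|: (if u \in K then [set a] else set0))) ->
  forall x : L * {set S}, a \notin x.2 -> [set u in K | p' u == x] = set0.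
Proof.
move=> pp x ax; apply/setP => u; rewrite !inE.
case: (boolP (u \in K)) => uK //=; apply/negbTE; apply: contra ax => /eqP <-.
by rewrite pp uK !inE eqxx orbT.
Qed.
Arguments split_card {T S L p p' K a}.
Arguments in_card {T S L p p' K a}.
Arguments out_card {T S L p p' K a}.

Lemma perm_card (T1 T2 : finType) (X : eqType) (p : T1 -> X) (d : T2 -> X) (A : {set T1}) (B : {set T2}) :
  perm_eq (map p (enum A)) (map d (enum B)) <->
  (forall x, #|[set u in A | p u == x]| = #|[set v in B | d v == x]|).
Proof.
have E1 : forall (T : finType) (q : T -> X) (C : {set T}) x,
  count_mem x (map q (enum C)) = #|[set u in C | q u == x]|.
  by move=> T q C x; rewrite count_map count_enum_card.
split => [/permP H x|H].
  by rewrite -!E1 H.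
by apply/allP => x _; rewrite /= !E1 H.
Qed.

Theorem mainTheorem1 (Vq Vh : finType) (L : eqType) (lq : Vq -> L) (lH : Vh -> L)
    (EQ : {set {set Vq}}) (EH : {set {set Vh}})
    (hEQ : forall e, e \in EQ -> e != set0)
    (hEH : forall e, e \in EH -> e != set0)
    (es : seq {set Vq}) (ek : {set Vq}) (f : {set Vq} -> {set Vh})
    (huniq : uniq (rcons es ek))
    (hsub : {subset rcons es ek <= EQ})
    (hfinj : {in rcons es ek &, injective f})
    (hfH : {in rcons es ek, forall e, f e \in EH})
    (hm : is_embedding lq lH es f) :
  is_embedding lq lH (rcons es ek) f <->
  perm_eq [seq qprofile lq f (rcons es ek) u | u <- enum ek]
          [seq dprofile lH (map f (rcons es ek)) v | v <- enum (f ek)].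
Proof.
have ekE : ek \in rcons es ek by rewrite mem_rcons mem_head.
have esE : forall e, e \in es -> e \in rcons es ek by move=> e; rewrite mem_rcons inE orbC => ->.
have eknes : ek \notin es by move: huniq; rewrite rcons_uniq => /andP[].
have qa : forall u, f ek \notin (qprofile lq f es u).2.
  move=> u; apply/negP => /imsetP[e]; rewrite inE => /andP[He _] fe.
  by move: eknes; rewrite (hfinj _ _ ekE (esE _ He) fe) He.
have da : forall v, f ek \notin (dprofile lH (map f es) v).2.
  move=> v; apply/negP; rewrite inE => /andP[/mapP[e He fe] _].
  by move: eknes; rewrite (hfinj _ _ ekE (esE _ He) fe) He.
have qs : forall u, qprofile lq f (rcons es ek) u = ((qprofile lq f es u).1,
   (qprofile lq f es u).2 :|: (if u \in ek then [set f ek] else set0)).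
  move=> u; rewrite /qprofile /=; congr pair.
  have -> : [set e | (e \in rcons es ek) && (u \in e)] =
      [set e | (e \in es) && (u \in e)] :|: (if u \in ek then [set ek] else set0).
    apply/setP => e; rewrite !inE mem_rcons in_cons.
    case: (boolP (u \in ek)) => uk; rewrite !inE ?orbF.
      by case: (e =P ek) => [->|_] /=; rewrite ?orbT ?orbF ?uk.
    by case: (e =P ek) => [->|_] /=; rewrite ?orbF ?(negPf uk) ?andbF.
  by rewrite imsetU; case: (u \in ek); rewrite ?imset_set1 ?imset0.
have ds : forall v, dprofile lH (map f (rcons es ek)) v = ((dprofile lH (map f es) v).1,
   (dprofile lH (map f es) v).2 :|: (if v \in f ek then [set f ek] else set0)).
  move=> v; rewrite /dprofile /=; congr pair; rewrite map_rcons.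
  apply/setP => e; rewrite !inE mem_rcons in_cons.
  case: (boolP (v \in f ek)) => vk; rewrite !inE ?orbF.
    by case: (e =P f ek) => [->|_] /=; rewrite ?orbT ?orbF ?vk.
  by case: (e =P f ek) => [->|_] /=; rewrite ?orbF ?(negPf vk) ?andbF.
split.
- move=> /emb_count H; apply/perm_card => x; case: (boolP (f ek \in x.2)) => ax.
    rewrite -(in_card qa qs _ ax) -(in_card da ds _ ax) H //.
    by apply/set0Pn; exists (f ek).
  rewrite (out_card qs _ ax). rewrite (out_card ds _ ax). by rewrite !cards0.
- move=> /perm_card H.
  have [v0 _] : exists v0, v0 \in f ek by apply/set0Pn; apply: hEH; apply: hfH.
  apply: (count_emb v0) => // x x0.
  case: (boolP (f ek \in x.2)) => ax.
    by rewrite (in_card qa qs _ ax) (in_card da ds _ ax) H.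
  have := emb_count hm x x0.
  rewrite (split_card qa qs _ ax) (split_card da ds _ ax) H.
  by move/addIn.
Qed.
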